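(* Let $\mathcal{Z}$ be the set of all connected chemical reaction networks with kinetics $(\mathcal{S},\mathcal{C},\mathcal{R},k)$, and let $\mathcal{U}$ be the set of all stochastic Petri nets $(P,T,F,\omega,r)$ with $\omega\colon F\to\mathbb{N}_+$ and $r\colon T\to\mathbb{R}_{\ge0}$ satisfying: (i) there are no two distinct transitions $z\neq z'$ in $T$ with $\mathcal{N}_{\mathrm{in}}(z)=\mathcal{N}_{\mathrm{in}}(z')$, $\mathcal{N}_{\mathrm{out}}(z)=\mathcal{N}_{\mathrm{out}}(z')$, $\omega(p,z)=\omega(p,z')$ for all $p\in\mathcal{N}_{\mathrm{in}}(z)$ and $\omega(z,p)=\omega(z',p)$ for all $p\in\mathcal{N}_{\mathrm{out}}(z)$; (ii) there is no transition $z\in T$ with $\mathcal{N}_{\mathrm{in}}(z)=\mathcal{N}_{\mathrm{out}}(z)$ and $\omega(p,z)=\omega(z,p)$ for all $p\in\mathcal{N}_{\mathrm{in}}(z)$. Let $\widetilde{\mathcal{U}}$ be the set of type-1 isomorphism classes of $\mathcal{U}$. Then there is a bijection $\kappa\colon\mathcal{Z}\to\widetilde{\mathcal{U}}$ given by $\kappa(\mathcal{S},\mathcal{C},\mathcal{R},k)=[(\mathcal{S},\mathcal{R},F,\omega,k)]_1$, where the reactions serve as transitions (taken disjoint from $\mathcal{S}$), $F=\{(s,(f,g))\in\mathcal{S}\times\mathcal{R}: s\in\operatorname{Dom}(f)\}\cup\{((f,g),s)\in\mathcal{R}\times\mathcal{S}: s\in\operatorname{Dom}(g)\}$, $\omega(s,(f,g))=f(s)$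 and $\omega((f,g),s)=g(s)$. Its inverse is $\kappa^{-1}([(P,T,F,\omega,r)]_1)=(P,\mathcal{C},\mathcal{R},k)$ where $\mathcal{R}=\{(f_x,g_x):x\in T\}$ with $f_x\colon P\rightharpoonup\mathbb{N}_+$, $\operatorname{Dom}(f_x)=\mathcal{N}_{\mathrm{in}}(x)$, $f_x(y)=\omega(y,x)$, and $g_x\colon P\rightharpoonup\mathbb{N}_+$, $\operatorname{Dom}(g_x)=\mathcal{N}_{\mathrm{out}}(x)$, $g_x(y)=\omega(x,y)$; $\mathcal{C}=\bigcup_{(f,g)\in\mathcal{R}}\{f,g\}$; and $k(f_x,g_x)=r(x)$.
   Context: A positive partial multiset on a set $A$ is a partial function $A\rightharpoonup\mathbb{N}_+$ (a function from a subset $\operatorname{Dom}\subseteq A$ to the positive integers; the empty function is allowed). A connected chemical reaction network with kinetics is a quadruple $(\mathcal{S},\mathcal{C},\mathcal{R},k)$ where $\mathcal{S}$ is a finite set (species), $\mathcal{C}$ is a finite set of positive partial multisets on $\mathcal{S}$ (complexes), $\mathcal{R}\subseteq\mathcal{C}\times\mathcal{C}$ is irreflexive (no pair $(c,c)$) (reactions), $\mathcal{C}=\bigcup_{(c,c')\in\mathcal{R}}\{c,c'\}$, and $k\colon\mathcal{R}\to\mathbb{R}_{\ge0}$. A stochastic Petri net is a tuple $(P,T,F,\omega,r)$ with $P$ (places, labelled) and $T$ (transitions) finite disjoint sets, $F\subseteq(P\times T)\cup(T\times P)$ (arcs), $\omega\colon F\to\mathbb{N}_+$ (arc weights) and $r\colon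 T\to\mathbb{R}_{\ge0}$ (rates). For $z\in T$: $\mathcal{N}_{\mathrm{in}}(z)=\{p\in P:(p,z)\in F\}$ and $\mathcal{N}_{\mathrm{out}}(z)=\{p\in P:(z,p)\in F\}$. Two stochastic Petri nets $(P,T,F,\omega,r)$ and $(P',T',F',\omega',r')$ are type-1 isomorphic if $P=P'$ (places identified by their labels) and there is a bijection $\psi\colon T\to T'$ such that, extending $\psi$ by the identity on $P$, $(x,y)\in F\iff(\psi x,\psi y)\in F'$, $\omega'(\psi x,\psi y)=\omega(x,y)$ for $(x,y)\in F$, and $r'\circ\psi=r$; $[\,\cdot\,]_1$ denotes the type-1 isomorphism class. *)

(* Defs.v *)
From mathcomp Require Import all_boot.
From mathcomp Require Import finmap.
From Stdlib Require Import Reals.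

Set Implicit Arguments.
Unset Strict Implicit.
Unset Printing Implicit Defensive.

Local Open Scope fset_scope.
Local Open Scope fmap_scope.

(* A (positive) partial multiset on L: a finite map L -> nat whose
   domain is Dom(f) and whose values are all positive. *)
Definition pmset (L : choiceType) := {fmap L -> nat}.

Definition positive_pm (L : choiceType) (S : {fset L}) (f : pmset L) : Prop :=
  domf f `<=` S /\ (forall s (hs : s \in domf f), 0 < f.[hs])%N.

Record crn (L : choiceType) := CRN {
  species : {fset L};
  complexes : {fset pmset L};
  reactions : {fset (pmset L * pmset L)};
  kinetics : {fmap (pmset L * pmset L) -> R}
}.

Definition crn_wf (L : choiceType) (z : crn L) : Prop :=
  [/\ forall c, c \in complexes z -> positive_pm (species z) c,
      forall c, c \in reactions z -> c.1 != c.2,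
      complexes z = [fset c.1 | c in reactions z] `|` [fset c.2 | c in reactions z],
      domf (kinetics z) = reactions z
    & forall c (hc : c \in domf (kinetics z)), (0 <= (kinetics z).[hc])%R].

(* Places are labels in L,
   transitions form a finite type (hence disjoint from places).
   The arc set F is split into input arcs (P x T) and output arcs (T x P);
   the weights w_in / w_out are only meaningful on arcs (omega : F -> N+). *)
Record spn (L : choiceType) := SPN {
  places : {fset L};
  trans : finType;
  arc_in : L -> trans -> bool;
  arc_out : trans -> L -> bool;
  w_in : L -> trans -> nat;
  w_out : trans -> L -> nat;
  rate : trans -> R
}.
Arguments arc_in {L} s p z.
Arguments arc_out {L} s z p.
Arguments w_in {L} s p z.
Arguments w_out {L} s z p.
Arguments rate {L} s z.

Definition spn_wf (L : choiceType) (u : spn L) : Prop :=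
  [/\ forall p z, arc_in u p z -> p \in places u,
      forall z p, arc_out u z p -> p \in places u,
      forall p z, arc_in u p z -> (0 < w_in u p z)%N,
      forall z p, arc_out u z p -> (0 < w_out u z p)%N
    & forall z, (0 <= rate u z)%R].

Definition Nin (L : choiceType) (u : spn L) (z : trans u) : {fset L} :=
  [fset p in places u | arc_in u p z].
Definition Nout (L : choiceType) (u : spn L) (z : trans u) : {fset L} :=
  [fset p in places u | arc_out u z p].

Definition inU (L : choiceType) (u : spn L) : Prop :=
  [/\ spn_wf u,
      ~ exists z z' : trans u,
          [/\ z != z', Nin z = Nin z', Nout z = Nout z',
              forall p, p \in Nin z -> w_in u p z = w_in u p z'
            & forall p, p \in Nout z -> w_out u z p = w_out u z' p]
    & ~ exists z : trans u,
          Nin z = Nout z /\ forall p, p \in Nin z -> w_in u p z = w_out u z p].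

Definition iso1 (L : choiceType) (u u' : spn L) : Prop :=
  places u = places u' /\
  exists psi : trans u -> trans u',
    bijective psi /\
    [/\ forall p z, arc_in u p z = arc_in u' p (psi z),
        forall z p, arc_out u z p = arc_out u' (psi z) p,
        forall p z, arc_in u p z -> w_in u' p (psi z) = w_in u p z,
        forall z p, arc_out u z p -> w_out u' (psi z) p = w_out u z p
      & forall z, rate u' (psi z) = rate u z].

Definition pm_val (L : choiceType) (f : pmset L) (s : L) : nat := odflt 0%N (f.[? s]).

Definition kappa (L : choiceType) (z : crn L) : spn L :=
  @SPN L (species z) (reactions z : finType)
    (fun s x => s \in domf (val x).1)
    (fun x s => s \in domf (val x).2)
    (fun s x => pm_val (val x).1 s)
    (fun x s => pm_val (val x).2 s)
    (fun x => odflt 0%R ((kinetics z).[? val x])).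

Definition f_of (L : choiceType) (u : spn L) (x : trans u) : pmset L :=
  [fmap p : Nin x => w_in u (val p) x].
Definition g_of (L : choiceType) (u : spn L) (x : trans u) : pmset L :=
  [fmap p : Nout x => w_out u x (val p)].
Definition reac_of (L : choiceType) (u : spn L) (x : trans u) :=
  (f_of x, g_of x).

Definition kappa_inv_reactions (L : choiceType) (u : spn L) :
  {fset (pmset L * pmset L)} := [fset reac_of x | x : trans u].

Definition kappa_inv (L : choiceType) (u : spn L) : crn L :=
  let Rs := kappa_inv_reactions u in
  @CRN L (places u)
    ([fset c.1 | c in Rs] `|` [fset c.2 | c in Rs])
    Rs
    [fmap c : Rs =>
       match [pick x : trans u | reac_of x == val c] with
       | Some x => rate u x
       | None => 0%R
       end].

(* Main.v *)
Require Import Defs.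
From mathcomp Require Import all_boot.
From mathcomp Require Import finmap.
From Stdlib Require Import Reals.
Set Implicit Arguments. Unset Strict Implicit. Unset Printing Implicit Defensive.
Local Open Scope fset_scope.
Local Open Scope fmap_scope.

Lemma fnd_mkIn (K : choiceType) V (S : {fset K}) (F : S -> V) k (kS : k \in S) :
  ([fmap p : S => F p]).[? k] = Some (F [` kS]).
Proof. by rewrite (in_fnd (f:=[fmap p : S => F p]) kS) /= ffunE. Qed.

Lemma fnd_mkNin (K : choiceType) V (S : {fset K}) (F : S -> V) k :
  k \notin S -> ([fmap p : S => F p]).[? k] = None.
Proof. by move=> kS; rewrite not_fnd. Qed.

Lemma getf_mk (K : choiceType) V (S : {fset K}) (F : S -> V) k (kS : k \in domf [fmap p : S => F p]) :
  ([fmap p : S => F p]).[kS] = F [` kS].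
Proof. by rewrite /= ffunE. Qed.

Lemma pm_ext (L : choiceType) (f g : pmset L) :
  domf f = domf g -> (forall p, p \in domf f -> pm_val f p = pm_val g p) -> f = g.
Proof.
move=> Ed Ev; apply/fmapP => k.
case: (boolP (k \in domf f)) => kf.
  have kg : k \in domf g by rewrite -Ed.
  have := Ev _ kf; rewrite /pm_val (in_fnd kf) (in_fnd kg) /= => ->; done.
have kg : k \notin domf g by rewrite -Ed.
by rewrite (not_fnd kf) (not_fnd kg).
Qed.

Lemma Nin_mem (L : choiceType) (u : spn L) (x : trans u) p :
  (p \in Nin x) = (p \in places u) && arc_in u p x.
Proof. by rewrite !inE. Qed.
Lemma Nout_mem (L : choiceType) (u : spn L) (x : trans u) p :
  (p \in Nout x) = (p \in places u) && arc_out u x p.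
Proof. by rewrite !inE. Qed.
Section P1.
Variable L : choiceType.

Lemma wf_pos (z : crn L) c : crn_wf z -> c \in reactions z ->
  positive_pm (species z) c.1 /\ positive_pm (species z) c.2.
Proof.
case=> Hc _ Ec _ _ cR; split; apply: Hc; rewrite Ec inE; apply/orP.
  by left; apply/imfsetP; exists c.
by right; apply/imfsetP; exists c.
Qed.

Lemma Nin_kappa (z : crn L) (x : trans (kappa z)) : crn_wf z ->
  Nin x = domf (val x).1.
Proof.
move=> wf; have [[sub1 _] _] := wf_pos wf (valP x).
apply/fsetP => p; rewrite Nin_mem /=.
by case: (boolP (p \in domf _)) => h; rewrite ?andbT ?andbF //; apply: (fsubsetP sub1).
Qed.

Lemma Nout_kappa (z : crn L) (x : trans (kappa z)) : crn_wf z ->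
  Nout x = domf (val x).2.
Proof.
move=> wf; have [_ [sub1 _]] := wf_pos wf (valP x).
apply/fsetP => p; rewrite Nout_mem /=.
by case: (boolP (p \in domf _)) => h; rewrite ?andbT ?andbF //; apply: (fsubsetP sub1).
Qed.

Lemma pair_ext (A B : Type) (a b : A * B) : a.1 = b.1 -> a.2 = b.2 -> a = b.
Proof. by case: a; case: b => /= ? ? ? ? -> ->. Qed.

Lemma part1 (z : crn L) : crn_wf z -> inU (kappa z).
Proof.
move=> wf; have wf' := wf; case: wf' => Hc Hne Ec Ek Hk.
split.
- split.
  + move=> p x /= h; have [[sub1 _] _] := wf_pos wf (valP x); exact: (fsubsetP sub1).
  + move=> x p /= h; have [_ [sub1 _]] := wf_pos wf (valP x); exact: (fsubsetP sub1).
  + move=> p x /= h; have [[_ pos] _] := wf_pos wf (valP x).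
    by rewrite /pm_val (in_fnd h) /=; apply: pos.
  + move=> x p /= h; have [_ [_ pos]] := wf_pos wf (valP x).
    by rewrite /pm_val (in_fnd h) /=; apply: pos.
  + move=> x /=; have xk : val x \in domf (kinetics z) by rewrite Ek (valP x).
    by rewrite (in_fnd xk) /=; apply: Hk.
- case=> x [y [neq E1 E2 W1 W2]].
  have e : val x = val y.
    apply: pair_ext; apply: pm_ext.
    + by rewrite -!Nin_kappa.
    + by move=> p; rewrite -(Nin_kappa _ wf) => /W1.
    + by rewrite -!Nout_kappa.
    + by move=> p; rewrite -(Nout_kappa _ wf) => /W2.
  by move: neq; rewrite (val_inj e) eqxx.
- case=> x [E W]; move: (Hne _ (valP x)) => /eqP; apply.
  apply: pm_ext.
  + by rewrite -Nin_kappa // -Nout_kappa.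
  + by move=> p; rewrite -(Nin_kappa _ wf) => /W.
Qed.
End P1.
Section P2.
Variable L : choiceType.

Lemma crn_ext (z1 z2 : crn L) : species z1 = species z2 -> complexes z1 = complexes z2 ->
  reactions z1 = reactions z2 -> kinetics z1 = kinetics z2 -> z1 = z2.
Proof. by case: z1; case: z2 => /= ? ? ? ? ? ? ? ? -> -> -> ->. Qed.

Lemma iso_val (z1 z2 : crn L) (psi : trans (kappa z1) -> trans (kappa z2)) :
  crn_wf z1 -> crn_wf z2 ->
  (forall p z, arc_in (kappa z1) p z = arc_in (kappa z2) p (psi z)) ->
  (forall z p, arc_out (kappa z1) z p = arc_out (kappa z2) (psi z) p) ->
  (forall p z, arc_in (kappa z1) p z -> w_in (kappa z2) p (psi z) = w_in (kappa z1) p z) ->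
  (forall z p, arc_out (kappa z1) z p -> w_out (kappa z2) (psi z) p = w_out (kappa z1) z p) ->
  forall x, val (psi x) = val x.
Proof.
move=> wf1 wf2 A1 A2 W1 W2 x; apply: pair_ext; apply: pm_ext.
- by apply/fsetP => p; have := A1 p x.
- move=> p h; have h1 : arc_in (kappa z1) p x by rewrite A1.
  exact (W1 p x h1).
- by apply/fsetP => p; have := A2 x p.
- move=> p h; have h1 : arc_out (kappa z1) x p by rewrite A2.
  exact (W2 x p h1).
Qed.

Lemma part2 (z1 z2 : crn L) : crn_wf z1 -> crn_wf z2 ->
     iso1 (kappa z1) (kappa z2) -> z1 = z2.
Proof.
move=> wf1 wf2 [Ep [psi [[phi K1 K2] [A1 A2 W1 W2 Rt]]]].
have V := iso_val wf1 wf2 A1 A2 W1 W2.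
have ER : reactions z1 = reactions z2.
  apply/fsetP => c; apply/idP/idP => h.
    by have := valP (psi [` h]); rewrite V.
  by have := valP (phi [` h]); rewrite -V K2.
case: wf1 => _ _ Ec1 Ek1 _; case: wf2 => _ _ Ec2 Ek2 _.
apply: crn_ext => //; first by rewrite Ec1 Ec2 ER.
apply/fmapP => k; case: (boolP (k \in reactions z1)) => h.
  have h1 : k \in domf (kinetics z1) by rewrite Ek1.
  have h2 : k \in domf (kinetics z2) by rewrite Ek2 -ER.
  have := Rt [` h]; rewrite /= V /= (in_fnd h1) (in_fnd h2) /= => ->; done.
have h1 : k \notin domf (kinetics z1) by rewrite Ek1.
have h2 : k \notin domf (kinetics z2) by rewrite Ek2 -ER.
by rewrite (not_fnd h1) (not_fnd h2).
Qed.
End P2.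
Section P3.
Variable L : choiceType.

Lemma domf_f (u : spn L) (x : trans u) : domf (f_of x) = Nin x. Proof. by []. Qed.
Lemma domf_g (u : spn L) (x : trans u) : domf (g_of x) = Nout x. Proof. by []. Qed.

Lemma fnd_f (u : spn L) (x : trans u) p : p \in Nin x -> (f_of x).[? p] = Some (w_in u p x).
Proof. by move=> h; rewrite /f_of (fnd_mkIn _ h). Qed.
Lemma fnd_g (u : spn L) (x : trans u) p : p \in Nout x -> (g_of x).[? p] = Some (w_out u x p).
Proof. by move=> h; rewrite /g_of (fnd_mkIn _ h). Qed.

Lemma fmap_ext2 (f g : pmset L) :
  domf f = domf g -> (forall p, p \in domf f -> f.[? p] = g.[? p]) -> f = g.
Proof.
move=> Ed Ev; apply/fmapP => k; case: (boolP (k \in domf f)) => kf; first exact: Ev.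
have kg : k \notin domf g by rewrite -Ed.
by rewrite (not_fnd kf) (not_fnd kg).
Qed.

Lemma reac_inj (u : spn L) : inU u -> injective (@reac_of L u).
Proof.
case=> _ Hi _ x y E.
have Ef : f_of x = f_of y := congr1 fst E.
have Eg : g_of x = g_of y := congr1 snd E.
case: (eqVneq x y) => // neq; exfalso; apply: Hi; exists x, y; split => //.
- by rewrite -!domf_f Ef.
- by rewrite -!domf_g Eg.
- move=> p h; have h' : p \in Nin y by rewrite -domf_f -Ef.
  by move: (fnd_f h) (fnd_f h'); rewrite Ef => -> [].
- move=> p h; have h' : p \in Nout y by rewrite -domf_g -Eg.
  by move: (fnd_g h) (fnd_g h'); rewrite Eg => -> [].
Qed.

Lemma reac_iso (u u' : spn L) (psi : trans u -> trans u') :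
  places u = places u' ->
  (forall p z, arc_in u p z = arc_in u' p (psi z)) ->
  (forall z p, arc_out u z p = arc_out u' (psi z) p) ->
  (forall p z, arc_in u p z -> w_in u' p (psi z) = w_in u p z) ->
  (forall z p, arc_out u z p -> w_out u' (psi z) p = w_out u z p) ->
  forall x, reac_of (psi x) = reac_of x.
Proof.
move=> Ep A1 A2 W1 W2 x; congr pair.
- have EN : Nin (psi x) = Nin x by apply/fsetP => p; rewrite !Nin_mem Ep A1.
  apply: fmap_ext2 => [|p h]; first by rewrite !domf_f.
  have h' : p \in Nin x by rewrite -EN.
  have {}h : p \in Nin (psi x) := h.
  rewrite (fnd_f h) (fnd_f h') W1 //; by move: h'; rewrite Nin_mem => /andP[].
- have EN : Nout (psi x) = Nout x by apply/fsetP => p; rewrite !Nout_mem Ep A2.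
  apply: fmap_ext2 => [|p h]; first by rewrite !domf_g.
  have h' : p \in Nout x by rewrite -EN.
  have {}h : p \in Nout (psi x) := h.
  rewrite (fnd_g h) (fnd_g h') W2 //; by move: h'; rewrite Nout_mem => /andP[].
Qed.

Lemma inv_ext (u u' : spn L) : places u = places u' ->
  kappa_inv_reactions u = kappa_inv_reactions u' ->
  (forall c, c \in kappa_inv_reactions u -> forall x x', reac_of x = c -> reac_of x' = c ->
      rate u x = rate u' x') ->
  kappa_inv u = kappa_inv u'.
Proof.
move=> Ep ER Hr; apply: crn_ext => //=; first by rewrite ER.
apply/fmapP => k; case: (boolP (k \in kappa_inv_reactions u)) => h.
  have h' : k \in kappa_inv_reactions u' by rewrite -ER.
  rewrite (fnd_mkIn _ h) (fnd_mkIn _ h') /=.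
  have [x0 _ e0] := imfsetP _ _ _ _ h.
  have [x0' _ e0'] := imfsetP _ _ _ _ h'.
  case: pickP => [x /eqP ex|]; last by move/(_ x0); rewrite -e0 eqxx.
  case: pickP => [x' /eqP ex'|]; last by move/(_ x0'); rewrite -e0' eqxx.
  by congr Some; apply: (Hr k h).
have h' : k \notin kappa_inv_reactions u' by rewrite -ER.
by rewrite (fnd_mkNin _ h) (fnd_mkNin _ h').
Qed.

Lemma part3 (u u' : spn L) : inU u -> inU u' -> iso1 u u' ->
     kappa_inv u = kappa_inv u'.
Proof.
move=> Hu Hu' [Ep [psi [[phi K1 K2] [A1 A2 W1 W2 Rt]]]].
have RI := reac_iso Ep A1 A2 W1 W2.
apply: inv_ext => //.
  apply/fsetP => c; apply/imfsetP/imfsetP => -[x _ ->].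
    by exists (psi x) => //; rewrite RI.
  by exists (phi x) => //; rewrite -RI K2.
move=> c _ x x' ex ex'.
have -> : x' = psi x by apply: (reac_inj Hu'); rewrite RI ex ex'.
by rewrite Rt.
Qed.
End P3.
Section P4.
Variable L : choiceType.

Lemma reac_in (u : spn L) (x : trans u) : reac_of x \in kappa_inv_reactions u.
Proof. by apply/imfsetP; exists x. Qed.

Lemma ex_reac (u : spn L) (c : kappa_inv_reactions u) : exists x : trans u, reac_of x == val c.
Proof. by have [x _ e] := imfsetP _ _ _ _ (valP c); exists x; rewrite e. Qed.

Definition psi_of (u : spn L) (c : kappa_inv_reactions u) : trans u := xchoose (ex_reac c).

Lemma psi_ofP (u : spn L) (c : kappa_inv_reactions u) : reac_of (psi_of c) = val c.
Proof. exact/eqP/(xchooseP (ex_reac c)). Qed.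

Lemma fnd_pos (u : spn L) (x : trans u) : spn_wf u ->
  positive_pm (places u) (f_of x) /\ positive_pm (places u) (g_of x).
Proof.
case=> _ _ P1 P2 _; split; split.
- by apply/fsubsetP => p; rewrite domf_f Nin_mem => /andP[].
- move=> s hs; have := in_fnd hs; rewrite fnd_f // => -[<-].
  by apply: P1; move: hs; rewrite domf_f Nin_mem => /andP[].
- by apply/fsubsetP => p; rewrite domf_g Nout_mem => /andP[].
- move=> s hs; have := in_fnd hs; rewrite fnd_g // => -[<-].
  by apply: P2; move: hs; rewrite domf_g Nout_mem => /andP[].
Qed.

Lemma part4a (u : spn L) : inU u -> crn_wf (kappa_inv u).
Proof.
move=> Hu; have Hu' := Hu; case: Hu' => wf _ Hii; have wf' := wf; case: wf' => _ _ _ _ Hr.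
split => //=.
- move=> c; rewrite inE => /orP[] /imfsetP [c' /imfsetP [x _ ->] ->] /=.
    by case: (fnd_pos x wf).
  by case: (fnd_pos x wf).
- move=> c /imfsetP [x _ ->] /=; apply/eqP => E; apply: Hii; exists x; split.
    by rewrite -domf_f E.
  move=> p h; have h' : p \in Nout x by rewrite -domf_g -E.
  by move: (fnd_f h) (fnd_g h'); rewrite E => -> [].
- move=> c hc; rewrite getf_mk /=.
  by case: pickP => [x _|_]; [apply: Hr | apply: Rle_refl].
Qed.

Lemma part4b (u : spn L) : inU u -> iso1 (kappa (kappa_inv u)) u.
Proof.
move=> Hu; have Hu' := Hu; case: Hu' => wf _ _; have wf' := wf; case: wf' => I1 I2 _ _ _.
split => //.
exists (@psi_of u); split.
  exists (fun x => [` reac_in x]).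
    by move=> c; apply: val_inj; rewrite /= psi_ofP.
  by move=> x; apply: (reac_inj Hu); rewrite psi_ofP.
split.
- move=> p c /=; rewrite -psi_ofP /= Nin_mem.
  by case: (boolP (arc_in _ _ _)) => h; rewrite ?andbF ?andbT //; apply: I1 h.
- move=> c p /=; rewrite -psi_ofP /= Nout_mem.
  by case: (boolP (arc_out _ _ _)) => h; rewrite ?andbF ?andbT //; apply: I2 h.
- move=> p c /=; rewrite -psi_ofP /= => h.
  by rewrite /pm_val fnd_f.
- move=> c p /=; rewrite -psi_ofP /= => h.
  by rewrite /pm_val fnd_g.
- move=> c /=; rewrite (fnd_mkIn _ (valP c)) /=.
  case: pickP => [x /eqP ex|]; last by move/(_ (psi_of c)); rewrite psi_ofP eqxx.
  suff -> : x = psi_of c by [].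
  by apply: (reac_inj Hu); rewrite psi_ofP ex.
Qed.

Lemma reac_kappa (z : crn L) (x : trans (kappa z)) : crn_wf z -> reac_of x = val x.
Proof.
move=> wf; apply: pair_ext => /=.
  apply: fmap_ext2 => [|p h]; first by rewrite domf_f Nin_kappa.
  have h' : p \in Nin x := h.
  have h2 : p \in domf (val x).1 by rewrite -Nin_kappa.
  by rewrite (fnd_f h') /= /pm_val (in_fnd h2).
apply: fmap_ext2 => [|p h]; first by rewrite domf_g Nout_kappa.
have h' : p \in Nout x := h.
have h2 : p \in domf (val x).2 by rewrite -Nout_kappa.
by rewrite (fnd_g h') /= /pm_val (in_fnd h2).
Qed.

Lemma part5 (z : crn L) : crn_wf z -> kappa_inv (kappa z) = z.
Proof.
move=> wf; have wf' := wf; case: wf' => _ _ Ec Ek _.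
have ER : kappa_inv_reactions (kappa z) = reactions z.
  apply/fsetP => c; apply/imfsetP/idP => [[x _ ->]|h].
    by rewrite reac_kappa // (valP x).
  by exists [` h] => //; rewrite reac_kappa.
apply: crn_ext => //=; first by rewrite ER Ec.
apply/fmapP => k; case: (boolP (k \in kappa_inv_reactions (kappa z))) => h.
  have h' : k \in domf (kinetics z) by rewrite Ek -ER.
  rewrite (fnd_mkIn _ h) /= (in_fnd h').
  have hr : k \in reactions z by rewrite -ER.
  case: pickP => [x /eqP ex|]; last by move/(_ [` hr]); rewrite reac_kappa // eqxx.
  by rewrite reac_kappa // in ex; rewrite /= ex (in_fnd h').
have h' : k \notin domf (kinetics z) by rewrite Ek -ER.
by rewrite (fnd_mkNin _ h) (not_fnd h').
Qed.
End P4.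

Theorem proposition4 (L : choiceType) :
  (forall z : crn L, crn_wf z -> inU (kappa z)) /\
  (forall z1 z2 : crn L, crn_wf z1 -> crn_wf z2 ->
     iso1 (kappa z1) (kappa z2) -> z1 = z2) /\
  (forall u u' : spn L, inU u -> inU u' -> iso1 u u' ->
     kappa_inv u = kappa_inv u') /\
  (forall u : spn L, inU u ->
     crn_wf (kappa_inv u) /\ iso1 (kappa (kappa_inv u)) u) /\
  (forall z : crn L, crn_wf z -> kappa_inv (kappa z) = z).
Proof.
split; first exact: part1.
split; first exact: part2.
split; first exact: part3.
split; last exact: part5.
by move=> u Hu; split; [apply: part4a | apply: part4b].
Qed.
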